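(* Let $m\ge2$, $a\in(0,1/m)$, and $\Sigma=\Sigma_{HC}^+=\mathrm{cl}(\pi_a(X_a))\subset\{1,\ldots,2m\}^{\mathbb Z^+}$. The set of vertices of the follower set graph of $\Sigma$ is $\{\Theta^\xi:\xi \text{ a finite word (possibly empty) over }\{1,\ldots,m\}\}$, and the labeled edges of the graph are exactly: $\Theta^\xi\xrightarrow{i}\Theta^{\xi i}$ and $\Theta^{\xi i}\xrightarrow{i+m}\Theta^\xi$ for every finite word $\xi$ over $\{1,\ldots,m\}$ and every $i\in\{1,\ldots,m\}$; and $\Theta^\emptyset\xrightarrow{i}\Theta^\emptyset$ for every $i\in\{m+1,\ldots,2m\}$.
   Context: $F_a(x)=\frac{x-(i-1)a}{a}$ on $[(i-1)a,ia)$, $i\in\{1,\ldots,m\}$, and $F_a(x)=\frac{x-ma}{1-ma}$ on $[ma,1]$. $\Omega_i^+=[(i-1)a,ia)\times[0,1]$ for $i\le m$; $\Omega_i^+=[ma,1]\times[\frac{i-m-1}{m},\frac{i-m}{m})$ for $m+1\le i\le 2m-1$; $\Omega_{2m}^+=[ma,1]\times[\frac{m-1}{m},1]$. $f_a(x,y)=(F_a(x),\frac{y}{m}+\frac{i-1}{m})$ on $\Omega_i^+$ for $i\le m$, $f_a(x,y)=(F_a(x),my-i+m+1)$ on $\Omega_i^+$ for $i\ge m+1$. $X_a=\bigcap_{n\ge0}f_a^{-n}(\bigcup_i\mathrm{int}(\Omega_i^+))$ and $\pi_a(p)=(\omega_n)_{n\ge0}$ where $f_a^n(p)\in\mathrm{int}(\Omega^+_{\omega_n})$;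 closure in the product topology. For a one-sided subshift $\Sigma$ on a finite set $S$, $L(\Sigma)$ is the set of finite words (including the empty word $\emptyset$, with $\emptyset\xi=\xi\emptyset=\xi$) appearing in elements of $\Sigma$. For $\xi\in L(\Sigma)$ the follower set is $\Theta^\xi=\{\eta\in\Sigma:\xi\eta\in\Sigma\}$. The follower set graph of $\Sigma$ is the $S$-labeled directed graph whose vertices are the follower sets (as subsets of $\Sigma$), with a $\gamma$-labeled edge $\Theta^\xi\xrightarrow{\gamma}\Theta^\eta$ if and only if $\xi\gamma\in L(\Sigma)$ and $\Theta^\eta=\Theta^{\xi\gamma}$. *)

(* Defs.v *)
From Stdlib Require Import Reals Lra Lia ZArith Arith List.
Open Scope R_scope.

Definition pt := (R * R)%type.

(** Index i of the half-open piece Omega_i^+ containing p = (x,y) in [0,1]^2.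
    For x in [(i-1)a, ia) (i <= m), floor(x/a) = i-1.
    For x in [ma,1] the index is m+1+j where j = min(floor(m y), m-1), i.e.
    y in [j/m,(j+1)/m) for j <= m-2 and y in [(m-1)/m,1] for j = m-1. *)
Definition piece_idx (m : nat) (a : R) (p : pt) : nat :=
  let (x, y) := p in
  if Rlt_dec x (INR m * a) then (Z.to_nat (Int_part (x / a)) + 1)%nat
  else (m + 1 + Nat.min (Z.to_nat (Int_part (INR m * y))) (m - 1))%nat.

Definition fa_piece (m : nat) (a : R) (i : nat) (p : pt) : pt :=
  let (x, y) := p in
  if (i <=? m)%nat then
    ((x - INR (i - 1) * a) / a, y / INR m + INR (i - 1) / INR m)
  else
    ((x - INR m * a) / (1 - INR m * a), INR m * y - INR i + INR m + 1).

Definition fa (m : nat) (a : R) (p : pt) : pt :=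
  fa_piece m a (piece_idx m a p) p.

Definition in_int_Omega (m : nat) (a : R) (i : nat) (p : pt) : Prop :=
  let (x, y) := p in
  ((1 <= i <= m)%nat /\ INR (i - 1) * a < x < INR i * a /\ 0 < y < 1)
  \/
  ((m + 1 <= i <= 2 * m)%nat /\ INR m * a < x < 1 /\
     INR (i - m - 1) / INR m < y < INR (i - m) / INR m).

(** One-sided sequences over the alphabet {1,...,2m} are modelled as nat -> nat. *)
Definition sequence := nat -> nat.

(** [codes m a p w] : p is in X_a and pi_a(p) = w, i.e.
    f_a^n(p) lies in int(Omega^+_{w n}) for every n >= 0. *)
Definition codes (m : nat) (a : R) (p : pt) (w : sequence) : Prop :=
  forall n : nat, in_int_Omega m a (w n) (Nat.iter n (fa m a) p).

Definition X_a (m : nat) (a : R) (p : pt) : Prop :=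
  forall n : nat, exists i : nat, (1 <= i <= 2 * m)%nat /\
    in_int_Omega m a i (Nat.iter n (fa m a) p).

Definition pi_image (m : nat) (a : R) (w : sequence) : Prop :=
  exists p : pt, X_a m a p /\ codes m a p w.

(** Closure in the product topology of {1..2m}^N (discrete factors):
    every cylinder [w_0 ... w_{N-1}] around w meets the set. *)
Definition closure_prod (S : sequence -> Prop) (w : sequence) : Prop :=
  forall N : nat, exists s : sequence, S s /\ forall n, (n < N)%nat -> s n = w n.

Definition Sigma_HC (m : nat) (a : R) : sequence -> Prop :=
  closure_prod (pi_image m a).

Definition word := list nat.

Definition cat_ws (xi : word) (eta : sequence) : sequence :=
  fun n => if (n <? length xi)%nat then nth n xi 0%nat else eta (n - length xi)%nat.

Definition lang (S : sequence -> Prop) (xi : word) : Prop :=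
  exists w : sequence, S w /\ exists k : nat,
    forall j, (j < length xi)%nat -> w (k + j)%nat = nth j xi 0%nat.

Definition follower (S : sequence -> Prop) (xi : word) : sequence -> Prop :=
  fun eta => S eta /\ S (cat_ws xi eta).

Definition set_eq (A B : sequence -> Prop) : Prop := forall w, A w <-> B w.

Definition fsg_vertex (S : sequence -> Prop) (A : sequence -> Prop) : Prop :=
  exists xi : word, lang S xi /\ set_eq A (follower S xi).

Definition fsg_edge (S : sequence -> Prop) (A : sequence -> Prop) (gamma : nat)
    (B : sequence -> Prop) : Prop :=
  exists xi : word, lang S xi /\ set_eq A (follower S xi) /\
    lang S (xi ++ gamma :: nil) /\ set_eq B (follower S (xi ++ gamma :: nil)).

Definition word_over_m (m : nat) (xi : word) : Prop :=
  Forall (fun s => (1 <= s <= m)%nat) xi.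

(* Main.v *)
Require Import Defs.
From Stdlib Require Import Reals List.
From Stdlib Require Import Arith Lia Lra.
Import ListNotations.

Definition step (m : nat) (st : list nat) (s : nat) : option (list nat) :=
  if (s <=? m)%nat then Some ((s-1)%nat::st) else
  match st with [] => Some [] | d::st' => if (d =? s - m - 1)%nat then Some st' else None end.

Fixpoint runF (m : nat) (st : list nat) (v : list nat) : option (list nat) :=
  match v with [] => Some st
  | s::v' => match step m st s with Some st' => runF m st' v' | None => None end end.

Definition inr (m s : nat) : Prop := (1 <= s <= 2 * m)%nat.
Definition pref (w : sequence) (n : nat) : list nat := map w (seq 0 n).
Definition ValidF m st (w : sequence) := forall n, runF m st (pref w n) <> None.
Definition Valid m (w : sequence) := (forall n, inr m (w n)) /\ ValidF m [] w.

Lemma runF_app m u : forall st v, runF m st (u ++ v) =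
  match runF m st u with Some st' => runF m st' v | None => None end.
Proof. induction u as [|s u IH]; intros st v; simpl; auto.
  destruct (step m st s); auto. Qed.

Lemma pref_add w n d : pref w (n + d) = pref w n ++ map w (seq n d).
Proof. unfold pref. rewrite seq_app, map_app. reflexivity. Qed.

Lemma runF_pref_mono m st w n M : (n <= M)%nat -> runF m st (pref w M) <> None ->
  runF m st (pref w n) <> None.
Proof. intros H H1. replace M with (n + (M - n))%nat in H1 by lia.
  rewrite pref_add, runF_app in H1. destruct (runF m st (pref w n)); congruence. Qed.

Lemma map_seq_word w (z : list nat) : forall k,
  (forall j, (j < length z)%nat -> w (k + j)%nat = nth j z 0%nat) ->
  map w (seq k (length z)) = z.
Proof. induction z as [|x z IH]; intros k H; simpl; auto.
  f_equal. specialize (H 0%nat). rewrite Nat.add_0_r in H. apply H; simpl; lia.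
  apply IH. intros j Hj. replace (S k + j)%nat with (k + S j)%nat by lia. apply (H (S j)). simpl; lia. Qed.

Lemma map_seq_shift : forall n (f : nat -> nat) k, map f (seq k n) = map (fun i => f (k + i)%nat) (seq 0 n).
Proof. induction n as [|n IH]; intros f k; simpl; auto. f_equal. f_equal; lia.
  rewrite IH. rewrite (IH (fun i => f (k + i)%nat) 1%nat). apply map_ext. intro; f_equal; lia. Qed.

Lemma pref_cat xi eta k : pref (cat_ws xi eta) (length xi + k) = xi ++ pref eta k.
Proof. rewrite pref_add. f_equal.
  - unfold pref. apply map_seq_word. intros j Hj. unfold cat_ws. simpl.
    apply Nat.ltb_lt in Hj. rewrite Hj. reflexivity.
  - rewrite map_seq_shift. unfold pref. apply map_ext_in. intros i Hi.
    unfold cat_ws. destruct (Nat.ltb_spec (length xi + i) (length xi)). lia. f_equal; lia. Qed.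

Lemma ValidF_cat m st xi eta : ValidF m st (cat_ws xi eta) <->
  exists st', runF m st xi = Some st' /\ ValidF m st' eta.
Proof. split.
  - intros H. pose proof (H (length xi + 0)%nat) as H0. rewrite pref_cat, runF_app in H0.
    destruct (runF m st xi) as [st'|] eqn:E; [|congruence]. exists st'. split; auto.
    intro k. specialize (H (length xi + k)%nat). rewrite pref_cat, runF_app, E in H. exact H.
  - intros [st' [E H]] n. apply (runF_pref_mono _ _ _ _ (length xi + n)). lia.
    rewrite pref_cat, runF_app, E. apply H. Qed.

Lemma range_pref m w : (forall n, inr m (w n)) <-> forall n, Forall (inr m) (pref w n).
Proof. split.
  - intros H n. unfold pref. apply Forall_forall. intros x Hx. apply in_map_iff in Hx.
    destruct Hx as [i [<- _]]. apply H.
  - intros H n. specialize (H (S n)). unfold pref in H. rewrite seq_S, map_app in H.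
    apply Forall_app in H. destruct H as [_ H]. inversion H; auto. Qed.

Lemma range_cat m xi eta : (forall n, inr m (cat_ws xi eta n)) <->
  Forall (inr m) xi /\ forall n, inr m (eta n).
Proof. split.
  - rewrite !range_pref. intros H. split.
    + specialize (H (length xi + 0)%nat). rewrite pref_cat in H. apply Forall_app in H. tauto.
    + intro n. specialize (H (length xi + n)%nat). rewrite pref_cat in H. apply Forall_app in H. tauto.
  - intros [H1 H2] k.
    unfold cat_ws. destruct (Nat.ltb_spec k (length xi)).
    + rewrite Forall_forall in H1. apply H1. apply nth_In. auto.
    + apply H2.
Qed.

Lemma runF_push m xi : forall st, Forall (fun s => (1 <= s <= m)%nat) xi ->
  runF m st xi = Some (rev (map pred xi) ++ st).
Proof. induction xi as [|s xi IH]; intros st H; simpl; auto.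
  inversion H; subst. unfold step. destruct (Nat.leb_spec s m); [|lia].
  rewrite IH; auto. rewrite <- app_assoc. simpl. do 3 f_equal. lia. Qed.

Lemma runF_suffix m v : forall st0 st, runF m (st0 ++ st) v <> None -> runF m st0 v <> None.
Proof. induction v as [|s v IH]; intros st0 st H; simpl in *. congruence.
  unfold step in *. destruct (s <=? m)%nat.
  - apply (IH _ st). exact H.
  - destruct st0 as [|d st0']; simpl in *.
    + destruct st as [|d st']. simpl in H. exact H. simpl in H. destruct (d =? s - m - 1)%nat. apply (IH [] st'). exact H. congruence.
    + destruct (d =? s - m - 1)%nat. apply (IH _ st). exact H. exact H. Qed.

Lemma runF_digits m v : forall st r, Forall (inr m) v -> Forall (fun d => d < m)%nat st ->
  runF m st v = Some r -> Forall (fun d => d < m)%nat r.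
Proof. induction v as [|s v IH]; intros st r Hv Hs E; simpl in *. congruence.
  inversion Hv; subst. unfold inr in *. unfold step in E. destruct (Nat.leb_spec s m).
  - apply (IH _ _ H2 (Forall_cons (s-1)%nat (ltac:(lia) : (s - 1 < m)%nat) Hs) E).
  - destruct st as [|d st']. apply (IH _ _ H2 (Forall_nil _) E).
    destruct (d =? s - m - 1)%nat. inversion Hs; subst. apply (IH _ _ H2 H5 E). congruence. Qed.

Lemma const1_valid m st : (1 <= m)%nat -> ValidF m st (fun _ => 1%nat).
Proof. intros Hm n. rewrite runF_push. congruence. unfold pref.
  apply Forall_forall. intros x Hx. apply in_map_iff in Hx. destruct Hx as [i [<- _]]. lia. Qed.

Lemma word_inr m z : word_over_m m z -> Forall (inr m) z.
Proof. intro H. unfold word_over_m in H. eapply Forall_impl; [|exact H]. unfold inr; simpl; intros; lia. Qed.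

Section Comb.
Variable m : nat.
Hypothesis Hm : (1 <= m)%nat.
Variable S : sequence -> Prop.
Hypothesis HS : forall w, S w <-> Valid m w.

Lemma lang_char z : lang S z <-> Forall (inr m) z /\ runF m [] z <> None.
Proof. split.
  - intros [w [Hw [k Hk]]]. apply HS in Hw. destruct Hw as [Hr Hv].
    pose proof (map_seq_word w z k Hk) as E.
    split.
    + rewrite <- E. apply Forall_forall. intros x Hx. apply in_map_iff in Hx.
      destruct Hx as [i [<- _]]. apply Hr.
    + specialize (Hv (k + length z)%nat). rewrite pref_add, E, runF_app in Hv.
      destruct (runF m [] (pref w k)) as [st0|]; [|congruence].
      apply (runF_suffix m z [] st0). exact Hv.
  - intros [Hr Hv]. exists (cat_ws z (fun _ => 1%nat)). split.
    + apply HS. split.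
      * apply range_cat. split; auto. intro; unfold inr; lia.
      * apply ValidF_cat. destruct (runF m [] z) as [st|]; [|congruence].
        exists st. split; auto. apply const1_valid; auto.
    + exists 0%nat. intros j Hj. unfold cat_ws. simpl. apply Nat.ltb_lt in Hj. rewrite Hj. auto.
Qed.

Definition Fol st := fun eta => Valid m eta /\ ValidF m st eta.

Lemma fol_char z st : Forall (inr m) z -> runF m [] z = Some st ->
  set_eq (follower S z) (Fol st).
Proof. intros Hr E eta. unfold follower, Fol. rewrite !HS. unfold Valid.
  rewrite range_cat, ValidF_cat. split.
  - intros [[H1 H2] [H3 [st' [E' H4]]]]. rewrite E in E'. inversion E'; subst. tauto.
  - intros [[H1 H2] H3]. split; [tauto|]. split; [tauto|]. exists st; tauto. Qed.

Definition W (st : list nat) : word := rev (map Datatypes.S st).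

Lemma W_over st : Forall (fun d => d < m)%nat st -> word_over_m m (W st).
Proof. intro H. unfold W, word_over_m. apply Forall_rev. apply Forall_map.
  eapply Forall_impl; [|exact H]. simpl; intros; lia. Qed.

Lemma W_run st : Forall (fun d => d < m)%nat st -> runF m [] (W st) = Some st.
Proof. intro H. rewrite runF_push by (apply W_over; auto). unfold W.
  rewrite map_rev, rev_involutive, map_map, app_nil_r. simpl. rewrite map_id. auto. Qed.

Lemma set_eq_trans A B C : set_eq A B -> set_eq B C -> set_eq A C.
Proof. unfold set_eq; intros H1 H2 w. rewrite H1; auto. Qed.
Lemma set_eq_sym A B : set_eq A B -> set_eq B A.
Proof. unfold set_eq; intros H1 w. rewrite H1; tauto. Qed.

Lemma lang_over z : word_over_m m z -> lang S z.
Proof. intro H. apply lang_char. split. apply word_inr; auto.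
  rewrite runF_push; auto. congruence. Qed.

Lemma lang_run z : lang S z -> exists st, Forall (inr m) z /\ runF m [] z = Some st /\
  Forall (fun d => d < m)%nat st.
Proof. intro H. apply lang_char in H. destruct H as [Hr Hv].
  destruct (runF m [] z) as [st|] eqn:E; [|congruence]. exists st. split; auto. split; auto.
  eapply runF_digits; eauto. Qed.

Theorem comb_main :
  (forall xi : word, word_over_m m xi -> lang S xi) /\
  (forall A : sequence -> Prop,
     fsg_vertex S A <->
     exists xi : word, word_over_m m xi /\ set_eq A (follower S xi)) /\
  (forall (A : sequence -> Prop) (gamma : nat) (B : sequence -> Prop),
     fsg_edge S A gamma B <->
     ((exists (xi : word) (i : nat), word_over_m m xi /\ (1 <= i <= m)%nat /\
         gamma = i /\ set_eq A (follower S xi) /\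
         set_eq B (follower S (xi ++ i :: nil)))
      \/
      (exists (xi : word) (i : nat), word_over_m m xi /\ (1 <= i <= m)%nat /\
         gamma = (i + m)%nat /\ set_eq A (follower S (xi ++ i :: nil)) /\
         set_eq B (follower S xi))
      \/
      ((m + 1 <= gamma <= 2 * m)%nat /\
         set_eq A (follower S nil) /\ set_eq B (follower S nil)))).
Proof.
  split; [exact lang_over|]. split.
  - intro A. split.
    + intros [z [Hz HA]]. destruct (lang_run z Hz) as [st [Hr [E Hd]]].
      exists (W st). split. apply W_over; auto.
      eapply set_eq_trans; [exact HA|]. eapply set_eq_trans. apply (fol_char z st Hr E).
      apply set_eq_sym. apply fol_char. apply word_inr, W_over; auto. apply W_run; auto.
    + intros [xi [Hxi HA]]. exists xi. split; auto. apply lang_over; auto.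
  - intros A gamma B. split.
    + intros [z [Hz [HA [Hzg HB]]]].
      destruct (lang_run z Hz) as [st [Hr [E Hd]]].
      destruct (lang_run _ Hzg) as [st' [Hr' [E' Hd']]].
      pose proof E' as E'0. pose proof Hr' as Hr'0.
      rewrite runF_app, E in E'. simpl in E'.
      apply Forall_app in Hr'. destruct Hr' as [_ Hg]. inversion Hg; subst. unfold inr in H1.
      assert (HA' : set_eq A (Fol st)) by (eapply set_eq_trans; [exact HA|]; apply fol_char; auto).
      assert (HB' : set_eq B (Fol st')) by (eapply set_eq_trans; [exact HB|]; apply fol_char; auto).
      unfold step in E'. destruct (Nat.leb_spec gamma m).
      * left. exists (W st), gamma. inversion E'; subst. split. apply W_over; auto.
        split. lia. split. auto. split.
        -- eapply set_eq_trans; [exact HA'|]. apply set_eq_sym, fol_char. apply word_inr, W_over; auto. apply W_run; auto.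
        -- eapply set_eq_trans; [exact HB'|]. apply set_eq_sym, fol_char.
           apply Forall_app; split. apply word_inr, W_over; auto. constructor; auto.
           rewrite runF_app, W_run by auto. simpl. unfold step. destruct (Nat.leb_spec gamma m); [auto|lia].
      * destruct st as [|d st0].
        -- right; right. inversion E'; subst. split. lia. split.
           ++ eapply set_eq_trans; [exact HA'|]. apply set_eq_sym, fol_char; auto.
           ++ eapply set_eq_trans; [exact HB'|]. apply set_eq_sym, fol_char; auto.
        -- destruct (Nat.eqb_spec d (gamma - m - 1)); [|congruence]. inversion E'; subst.
           inversion Hd; subst.
           right; left. exists (W st'), (Datatypes.S (gamma - m - 1)). split. apply W_over; auto.
           split. lia. split. lia. split.
           ++ eapply set_eq_trans; [exact HA'|]. apply set_eq_sym, fol_char.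
              apply Forall_app; split. apply word_inr, W_over; auto. constructor; auto. unfold inr; lia.
              rewrite runF_app, W_run by auto. simpl. unfold step. destruct (Nat.leb_spec (Datatypes.S (gamma - m - 1)) m); [|lia].
              do 3 f_equal. lia.
           ++ eapply set_eq_trans; [exact HB'|]. apply set_eq_sym, fol_char. apply word_inr, W_over; auto. apply W_run; auto.
    + intros [[xi [i [Hxi [Hi [-> [HA HB]]]]]] | [[xi [i [Hxi [Hi [-> [HA HB]]]]]] | [Hg [HA HB]]]].
      * exists xi. split. apply lang_over; auto. split; auto. split; auto.
        apply lang_over. unfold word_over_m in *. apply Forall_app; split; auto.
      * assert (Hxi' : word_over_m m (xi ++ [i])) by (unfold word_over_m in *; apply Forall_app; split; auto).
        exists (xi ++ [i]). split. apply lang_over; auto. split; auto.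
        assert (Hr : Forall (inr m) ((xi ++ [i]) ++ [(i + m)%nat])).
        { apply Forall_app. split. apply word_inr; auto. constructor; auto. unfold inr; lia. }
        assert (Er : runF m [] ((xi ++ [i]) ++ [(i + m)%nat]) = runF m [] xi).
        { rewrite runF_app, runF_app. rewrite (runF_push m xi) by auto. simpl.
          unfold step. destruct (Nat.leb_spec i m); [|lia]. destruct (Nat.leb_spec (i + m) m); [lia|].
          destruct (Nat.eqb_spec (i - 1) (i + m - m - 1)); [|lia]. auto. }
        split.
        -- apply lang_char. split; auto. rewrite Er, runF_push; auto; congruence.
        -- eapply set_eq_trans; [exact HB|]. rewrite (runF_push m xi []) in Er by auto.
           eapply set_eq_trans. apply fol_char; [apply word_inr; auto|]. apply runF_push; auto.
           apply set_eq_sym, fol_char; auto.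
      * exists []. split. apply lang_char. split; auto. simpl; congruence. split; auto.
        assert (E1 : runF m [] [gamma] = Some []).
        { simpl. unfold step. destruct (Nat.leb_spec gamma m); [lia|]. auto. }
        split. apply lang_char. split. constructor; [unfold inr; lia|auto]. simpl app. rewrite E1; congruence.
        eapply set_eq_trans; [exact HB|]. eapply set_eq_trans. apply (fol_char [] []); [constructor|reflexivity].
        apply set_eq_sym. apply (fol_char [gamma] []). constructor; [unfold inr; lia|auto]. exact E1.
Qed.
End Comb.

Open Scope R_scope.

Lemma lt_div_iff (M y K : R) : 0 < M -> (y < K / M <-> M * y < K).
Proof. intros HM; split; intro H.
 - replace K with (M * (K/M)) by (field; lra). apply Rmult_lt_compat_l; auto.
 - apply Rmult_lt_reg_l with M; auto. replace (M*(K/M)) with K by (field; lra). auto. Qed.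

Lemma div_lt_iff (M y K : R) : 0 < M -> (K / M < y <-> K < M * y).
Proof. intros HM; split; intro H.
 - replace K with (M * (K/M)) by (field; lra). apply Rmult_lt_compat_l; auto.
 - apply Rmult_lt_reg_l with M; auto. replace (M*(K/M)) with K by (field; lra). auto. Qed.

Definition enc (m : nat) (L : list nat) (z : R) : R :=
  fold_right (fun d acc => (INR d + acc) / INR m) z L.

Lemma enc_bounds m L z : (1 <= m)%nat -> 0 < z < 1 -> Forall (fun d => d < m)%nat L ->
  0 < enc m L z < 1.
Proof. intros Hm Hz HL. induction HL as [|d L Hd HL IH]; simpl; auto.
  assert (HM : 0 < INR m) by (apply lt_0_INR; lia).
  assert (INR d + 1 <= INR m) by (rewrite <- S_INR; apply le_INR; lia).
  assert (0 <= INR d) by apply pos_INR.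
  split. apply Rdiv_lt_0_compat; lra.
  apply div_lt_iff; auto. lra. Qed.

Lemma int_part_eq (r : R) (k : nat) : INR k < r < INR k + 1 -> Int_part r = Z.of_nat k.
Proof. intros H. unfold Int_part.
  assert (E : Z.of_nat (Datatypes.S k) = up r).
  { apply tech_up; rewrite <- INR_IZR_INZ, S_INR; lra. }
  rewrite <- E. lia. Qed.

Definition stepS (m : nat) (st : list nat) (s : nat) : option (list nat) :=
  if (s <=? m)%nat then Some ((s-1)%nat::st) else
  match st with [] => None | d::st' => if (d =? s - m - 1)%nat then Some st' else None end.

Fixpoint runS (m : nat) (st : list nat) (v : list nat) : option (list nat) :=
  match v with [] => Some st
  | s::v' => match stepS m st s with Some st' => runS m st' v' | None => None end end.

Lemma runS_app m u : forall st v, runS m st (u ++ v) =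
  match runS m st u with Some st' => runS m st' v | None => None end.
Proof. induction u as [|s u IH]; intros st v; simpl; auto.
  destruct (stepS m st s); auto. Qed.

Lemma runS_push m xi : forall st, Forall (fun s => (1 <= s <= m)%nat) xi ->
  runS m st xi <> None.
Proof. induction xi as [|s xi IH]; intros st H; simpl. congruence.
  inversion H; subst. unfold stepS. destruct (Nat.leb_spec s m); [|lia]. apply IH; auto. Qed.

Lemma conv m v : forall st r, Forall (inr m) v -> runF m st v = Some r ->
  exists F, Forall (fun d => d < m)%nat F /\ runS m (st ++ F) v <> None.
Proof. induction v as [|s v IH]; intros st r Hv E.
  - exists []. split; auto. simpl. congruence.
  - inversion Hv; subst. unfold inr in H1. simpl in E. unfold step in E. simpl. unfold stepS.
    destruct (Nat.leb_spec s m).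
    + destruct (IH _ _ H2 E) as [F [HF HR]]. exists F. split; auto.
    + destruct st as [|d st0].
      * destruct (IH _ _ H2 E) as [F [HF HR]]. exists ((s - m - 1)%nat :: F). split.
        constructor; auto; lia. simpl. rewrite Nat.eqb_refl. exact HR.
      * destruct (Nat.eqb_spec d (s - m - 1)); [|congruence].
        destruct (IH _ _ H2 E) as [F [HF HR]]. exists F. split; auto. simpl.
        subst d. rewrite Nat.eqb_refl. exact HR.
Qed.

Lemma runF_single m st x : runF m st [x] = step m st x.
Proof. simpl. destruct (step m st x); auto. Qed.

Section R1.
Variable m : nat.
Variable a : R.
Hypothesis Hm : (2 <= m)%nat.
Hypothesis Ha : 0 < a.
Hypothesis Ham : a < 1 / INR m.

Lemma Mpos : 0 < INR m.
Proof. apply lt_0_INR; lia. Qed.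

Lemma ma_lt1 : INR m * a < 1.
Proof. pose proof Mpos. apply (lt_div_iff (INR m) a 1) in Ham; auto. Qed.

Lemma a_lt_half : a < 1/2.
Proof. pose proof ma_lt1. assert (2 <= INR m) by (replace 2 with (INR 2) by (simpl; lra); apply le_INR; auto).
  nra. Qed.

Lemma in_int_info s x y : in_int_Omega m a s (x, y) ->
  (1 <= s <= 2 * m)%nat /\ 0 < y < 1.
Proof. pose proof Mpos. simpl. intros [[Hs [Hx Hy]]|[Hs [Hx Hy]]]. split; [lia|lra].
  split; [lia|]. destruct Hy as [Hy1 Hy2].
  apply div_lt_iff in Hy1; auto. apply lt_div_iff in Hy2; auto.
  pose proof (pos_INR (s - m - 1)). assert (INR (s - m) <= INR m) by (apply le_INR; lia).
  split; nra. Qed.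

Lemma piece_idx_ok s x y : in_int_Omega m a s (x, y) -> piece_idx m a (x, y) = s.
Proof. pose proof Mpos. simpl. intros [[Hs [Hx Hy]]|[Hs [Hx Hy]]].
  - destruct (Rlt_dec x (INR m * a)) as [_|C].
    + rewrite (int_part_eq (x / a) (s - 1)). lia.
      replace (INR (s-1)) with (INR s - 1) in * by (rewrite minus_INR by lia; simpl; lra).
      split. apply lt_div_iff; auto. rewrite Rmult_comm; lra. apply div_lt_iff; auto. rewrite Rmult_comm; lra.
    + exfalso. apply C. assert (INR s <= INR m) by (apply le_INR; lia). nra.
  - destruct (Rlt_dec x (INR m * a)) as [C|_]. lra.
    rewrite (int_part_eq (INR m * y) (s - m - 1)). lia.
    destruct Hy as [Hy1 Hy2].
    apply div_lt_iff in Hy1; auto. apply lt_div_iff in Hy2; auto.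
    replace (INR (s - m)) with (INR (s - m - 1) + 1) in Hy2 by (rewrite <- S_INR; f_equal; lia).
    lra. Qed.

Lemma fa_on s x y : in_int_Omega m a s (x, y) -> fa m a (x, y) = fa_piece m a s (x, y).
Proof. intro H. unfold fa. rewrite (piece_idx_ok s x y H). reflexivity. Qed.

Definition hx (s : nat) (x : R) : R :=
  if (s <=? m)%nat then INR (s - 1) * a + a * x else INR m * a + (1 - INR m * a) * x.

Lemma hx_bounds s x : (1 <= s <= 2 * m)%nat -> 0 < x < 1 -> 0 < hx s x < 1.
Proof. intros Hs Hx. pose proof ma_lt1. pose proof Mpos. unfold hx. destruct (Nat.leb_spec s m).
  - pose proof (pos_INR (s - 1)). assert (INR (s - 1) + 1 <= INR m) by (rewrite <- S_INR; apply le_INR; lia).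
    split; nra.
  - split; nra. Qed.

Lemma fa_push s x y : (1 <= s <= m)%nat -> 0 < x < 1 -> 0 < y < 1 ->
  in_int_Omega m a s (hx s x, y) /\
  fa m a (hx s x, y) = (x, (INR (s - 1) + y) / INR m).
Proof. intros Hs Hx Hy. pose proof Mpos.
  assert (HI : in_int_Omega m a s (hx s x, y)).
  { simpl. left. unfold hx. destruct (Nat.leb_spec s m); [|lia].
    replace (INR s) with (INR (s - 1) + 1) by (rewrite <- S_INR; f_equal; lia).
    split; auto. split; [|lra]. split; nra. }
  split; auto. rewrite (fa_on _ _ _ HI). simpl. unfold hx. destruct (Nat.leb_spec s m); [|lia].
  f_equal; field; lra. Qed.

Lemma fa_pop s x y : (m + 1 <= s <= 2 * m)%nat -> 0 < x < 1 -> 0 < y < 1 ->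
  in_int_Omega m a s (hx s x, (INR (s - m - 1) + y) / INR m) /\
  fa m a (hx s x, (INR (s - m - 1) + y) / INR m) = (x, y).
Proof. intros Hs Hx Hy. pose proof Mpos. pose proof ma_lt1.
  assert (HI : in_int_Omega m a s (hx s x, (INR (s - m - 1) + y) / INR m)).
  { simpl. right. unfold hx. destruct (Nat.leb_spec s m); [lia|].
    split; auto. split. split; nra.
    replace (INR (s - m)) with (INR (s - m - 1) + 1) by (rewrite <- S_INR; f_equal; lia).
    split; apply Rmult_lt_compat_r; try apply Rinv_0_lt_compat; lra. }
  split; auto. rewrite (fa_on _ _ _ HI). simpl. unfold hx. destruct (Nat.leb_spec s m); [lia|].
  f_equal. field; lra.
  replace (INR (s - m - 1)) with (INR s - INR m - 1) by (rewrite !minus_INR by lia; simpl; lra).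
  field; lra. Qed.

Lemma fa_y s x y : in_int_Omega m a s (x, y) ->
  snd (fa m a (x, y)) = if (s <=? m)%nat then (INR (s - 1) + y) / INR m else INR m * y - INR (s - m - 1).
Proof. intro H. pose proof Mpos. pose proof (in_int_info _ _ _ H) as [Hs _].
  rewrite (fa_on _ _ _ H). unfold fa_piece. destruct (Nat.leb_spec s m); simpl snd.
  - field; lra.
  - replace (INR (s - m - 1)) with (INR s - INR m - 1) by (rewrite !minus_INR by lia; simpl; lra). ring. Qed.

Lemma realize (s : sequence) (X : nat -> R) (L : nat -> list nat) :
  (forall n, (1 <= s n <= 2 * m)%nat) -> (forall n, 0 < X n < 1) ->
  (forall n, X n = hx (s n) (X (S n))) -> Forall (fun d => d < m)%nat (L 0%nat) ->
  (forall n, (s n <= m)%nat -> L (S n) = (s n - 1)%nat :: L n) ->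
  (forall n, (m < s n)%nat -> L n = (s n - m - 1)%nat :: L (S n)) ->
  pi_image m a s.
Proof. intros Hs HX HXr HL0 Hpush Hpop.
  set (c := 1/2).
  assert (HLd : forall n, Forall (fun d => d < m)%nat (L n)).
  { induction n as [|n IH]; auto. destruct (Nat.leb_spec (s n) m).
    - rewrite Hpush; auto. constructor; auto. specialize (Hs n). lia.
    - specialize (Hpop n H). rewrite Hpop in IH. inversion IH; auto. }
  assert (Henc : forall n, 0 < enc m (L n) c < 1).
  { intro n. apply enc_bounds; auto. lia. unfold c; lra. }
  assert (Hstep : forall n, in_int_Omega m a (s n) (X n, enc m (L n) c) /\
     fa m a (X n, enc m (L n) c) = (X (S n), enc m (L (S n)) c)).
  { intro n. rewrite (HXr n). destruct (Nat.leb_spec (s n) m).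
    - rewrite (Hpush n H). simpl enc. apply fa_push; auto. specialize (Hs n); lia.
    - rewrite (Hpop n H). simpl enc. apply fa_pop; auto. specialize (Hs n); lia. }
  exists (X 0%nat, enc m (L 0%nat) c).
  assert (Hit : forall n, Nat.iter n (fa m a) (X 0%nat, enc m (L 0%nat) c) = (X n, enc m (L n) c)).
  { induction n as [|n IH]; auto. simpl. rewrite IH. apply Hstep. }
  split.
  - intro n. exists (s n). split; auto. rewrite Hit. apply Hstep.
  - intro n. rewrite Hit. apply Hstep.
Qed.

Lemma pop_bounds s x y : in_int_Omega m a s (x, y) -> (m < s)%nat ->
  INR (s - m - 1) < INR m * y < INR (s - m - 1) + 1.
Proof. pose proof Mpos. simpl. intros [[Hs _]|[Hs [_ [Hy1 Hy2]]]] Hl. lia.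
  apply div_lt_iff in Hy1; auto. apply lt_div_iff in Hy2; auto.
  replace (INR (s - m)) with (INR (s - m - 1) + 1) in Hy2 by (rewrite <- S_INR; f_equal; lia).
  lra. Qed.

Lemma pi_valid s : pi_image m a s -> forall n, runF m [] (pref s n) <> None.
Proof. intros [p [_ Hc]].
  assert (Inv : forall n, exists st z, runF m [] (pref s n) = Some st /\
     Forall (fun d => d < m)%nat st /\ 0 < z < 1 /\ snd (Nat.iter n (fa m a) p) = enc m st z).
  { induction n as [|n IH].
    - exists [], (snd p). split; auto. split; auto. split; auto.
      pose proof (Hc 0%nat) as H0. simpl in H0. destruct p as [x y].
      apply in_int_info in H0. simpl; tauto.
    - destruct IH as [st [z [E [Hd [Hz Hy]]]]].
      pose proof (Hc n) as Hn.
      destruct (Nat.iter n (fa m a) p) as [x y] eqn:Eq. simpl in Hy.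
      assert (Hit : Nat.iter (S n) (fa m a) p = fa m a (x, y)) by (simpl; rewrite Eq; auto).
      rewrite Hit. pose proof (fa_y (s n) x y Hn) as Hfy.
      pose proof (in_int_info (s n) x y Hn) as [Hs Hyb].
      pose proof Mpos as HM.
      unfold pref. rewrite seq_S, map_app. fold (pref s n). rewrite runF_app, E. simpl map. rewrite runF_single.
      unfold step. destruct (Nat.leb_spec (s n) m).
      + exists ((s n - 1)%nat :: st), z. split; auto. split. constructor; auto; lia.
        split; auto. rewrite Hfy. simpl. rewrite Hy. auto.
      + pose proof (pop_bounds _ _ _ Hn H) as Hpb. destruct st as [|d st0].
        * exists [], (snd (fa m a (x, y))). split; auto. split; auto. split; auto.
          rewrite Hfy. simpl in Hy. subst y. lra.
        * apply Forall_cons_iff in Hd. destruct Hd as [Hd1 Hd2].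
          pose proof (enc_bounds m st0 z ltac:(lia) Hz Hd2) as He.
          simpl in Hy. rewrite Hy in Hpb.
          replace (INR m * ((INR d + enc m st0 z) / INR m)) with (INR d + enc m st0 z) in Hpb by (field; lra).
          assert (Hdj : d = (s n - m - 1)%nat).
          { assert (INR d < INR (s n - m - 1) + 1) by lra. assert (INR (s n - m - 1) < INR d + 1) by lra.
            rewrite <- S_INR in *. apply INR_lt in H0. apply INR_lt in H1. lia. }
          clear Hpb.
          rewrite Hdj, Nat.eqb_refl. exists st0, z. split; auto. split; auto. split; auto.
          rewrite Hfy. rewrite Hy. rewrite <- Hdj. field; lra. }
  intro n. destruct (Inv n) as [st [z [E _]]]. congruence.
Qed.


Lemma runS_single st x : runS m st [x] = stepS m st x.
Proof. simpl. destruct (stepS m st x); auto. Qed.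

Lemma pref_S (w : sequence) n : pref w (S n) = pref w n ++ [w n].
Proof. unfold pref. rewrite seq_S, map_app. reflexivity. Qed.

Definition xs : R := a / (1 - a).

Lemma xs_bounds : 0 < xs < 1.
Proof. pose proof a_lt_half. unfold xs. split. apply Rdiv_lt_0_compat; lra.
  apply div_lt_iff; lra. Qed.

Lemma hx2 : hx 2 xs = xs.
Proof. pose proof a_lt_half. unfold hx. destruct (Nat.leb_spec 2 m); [|lia]. simpl. unfold xs. field. lra. Qed.

Fixpoint Xf (s : sequence) (N : nat) (k : nat) : R :=
  match k with 0%nat => xs | S k' => hx (s (N - S k')%nat) (Xf s N k') end.

Definition Xdef (s : sequence) (N : nat) (n : nat) : R :=
  if (n <? N)%nat then Xf s N (N - n) else xs.

Lemma X_props (s : sequence) (N : nat) : (forall n, (1 <= s n <= 2 * m)%nat) ->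
  (forall n, (N <= n)%nat -> s n = 2%nat) ->
  forall n, 0 < Xdef s N n < 1 /\ Xdef s N n = hx (s n) (Xdef s N (S n)).
Proof. intros Hs H2 n.
  assert (HXf : forall k, 0 < Xf s N k < 1).
  { induction k; simpl. apply xs_bounds. apply hx_bounds; auto. }
  unfold Xdef. destruct (Nat.ltb_spec n N).
  - split; auto. replace (N - n)%nat with (S (N - S n)) by lia. simpl.
    replace (N - S (N - S n))%nat with n by lia.
    destruct (Nat.ltb_spec (S n) N); auto. replace (N - S n)%nat with 0%nat by lia. reflexivity.
  - split. apply xs_bounds. destruct (Nat.ltb_spec (S n) N); [lia|]. rewrite H2 by lia. symmetry; apply hx2.
Qed.

Lemma valid_sigma w : Valid m w -> Sigma_HC m a w.
Proof. intros [Hr Hv] N.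
  set (v := pref w N).
  destruct (runF m [] v) as [st|] eqn:E; [|exfalso; exact (Hv N E)].
  assert (Hrv : Forall (inr m) v) by (apply range_pref; auto).
  destruct (conv m v [] st Hrv E) as [F [HF HR]]. simpl in HR.
  assert (Hlen : length v = N) by (unfold v, pref; rewrite length_map, length_seq; auto).
  set (s := cat_ws v (fun _ => 2%nat)).
  assert (Hs : forall n, (1 <= s n <= 2 * m)%nat).
  { intro n. pose proof (proj2 (range_cat m v (fun _ => 2%nat))) as Hc. apply Hc. split; auto.
    intro; unfold inr; lia. }
  assert (Hs2 : forall n, (N <= n)%nat -> s n = 2%nat).
  { intros n Hn. unfold s, cat_ws. destruct (Nat.ltb_spec n (length v)); [lia|auto]. }
  assert (HSn : forall n, runS m F (pref s n) <> None).
  { intro n. destruct (runS m F v) as [L1|] eqn:E1; [|congruence].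
    assert (H1 : runS m F (pref s (length v + n)) <> None).
    { unfold s. rewrite pref_cat, runS_app, E1. apply runS_push. unfold pref.
      apply Forall_forall. intros x Hx. apply in_map_iff in Hx. destruct Hx as [i [<- _]]. lia. }
    replace (length v + n)%nat with (n + length v)%nat in H1 by lia.
    rewrite pref_add, runS_app in H1. destruct (runS m F (pref s n)); congruence. }
  set (L := fun n => match runS m F (pref s n) with Some L => L | None => [] end).
  assert (HL : forall n, exists Ln, runS m F (pref s n) = Some Ln /\ L n = Ln).
  { intro n. unfold L. destruct (runS m F (pref s n)) as [Ln|] eqn:En. eauto. exfalso; exact (HSn n En). }
  exists s. split.
  - apply (realize s (Xdef s N) L Hs).
    + intro n. apply X_props; auto.
    + intro n. apply X_props; auto.
    + unfold L. simpl. exact HF.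
    + intros n Hn. destruct (HL n) as [Ln [En ELn]]. destruct (HL (S n)) as [Ln' [En' ELn']].
      rewrite ELn, ELn'. rewrite pref_S, runS_app, En, runS_single in En'. unfold stepS in En'.
      destruct (Nat.leb_spec (s n) m); [|lia]. congruence.
    + intros n Hn. destruct (HL n) as [Ln [En ELn]]. destruct (HL (S n)) as [Ln' [En' ELn']].
      rewrite ELn, ELn'. rewrite pref_S, runS_app, En, runS_single in En'. unfold stepS in En'.
      destruct (Nat.leb_spec (s n) m); [lia|]. destruct Ln as [|d Ln0]; [congruence|].
      destruct (Nat.eqb_spec d (s n - m - 1)); [|congruence]. subst d. congruence.
  - intros n Hn. unfold s, cat_ws. destruct (Nat.ltb_spec n (length v)); [|lia].
    unfold v, pref. rewrite (nth_indep _ 0%nat (w 0%nat)) by (rewrite length_map, length_seq; lia).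
    rewrite map_nth, seq_nth by lia. reflexivity.
Qed.

Lemma sigma_valid w : Sigma_HC m a w -> Valid m w.
Proof. intro H. split.
  - intro n. destruct (H (S n)) as [s [Hs Hag]]. rewrite <- (Hag n) by lia.
    destruct Hs as [p [_ Hc]]. specialize (Hc n).
    destruct (Nat.iter n (fa m a) p) as [x y]. apply in_int_info in Hc. unfold inr; tauto.
  - intro n. destruct (H n) as [s [Hs Hag]]. replace (pref w n) with (pref s n).
    apply pi_valid; auto. unfold pref. apply map_ext_in. intros i Hi. apply in_seq in Hi. apply Hag; lia.
Qed.

Lemma Sigma_char w : Sigma_HC m a w <-> Valid m w.
Proof. split; [apply sigma_valid|apply valid_sigma]. Qed.

End R1.

Theorem proposition2p1 (m : nat) (a : R) :
  (2 <= m)%nat -> 0 < a -> a < 1 / INR m ->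
  let S := Sigma_HC m a in
  (* every word over {1..m} is in L(Sigma), so Theta^xi is defined *)
  (forall xi : word, word_over_m m xi -> lang S xi) /\
  (* vertex set = { Theta^xi : xi word over {1..m} } *)
  (forall A : sequence -> Prop,
     fsg_vertex S A <->
     exists xi : word, word_over_m m xi /\ set_eq A (follower S xi)) /\
  (* the labeled edges are exactly the listed ones *)
  (forall (A : sequence -> Prop) (gamma : nat) (B : sequence -> Prop),
     fsg_edge S A gamma B <->
     ((exists (xi : word) (i : nat), word_over_m m xi /\ (1 <= i <= m)%nat /\
         gamma = i /\ set_eq A (follower S xi) /\
         set_eq B (follower S (xi ++ i :: nil)))
      \/
      (exists (xi : word) (i : nat), word_over_m m xi /\ (1 <= i <= m)%nat /\
         gamma = (i + m)%nat /\ set_eq A (follower S (xi ++ i :: nil)) /\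
         set_eq B (follower S xi))
      \/
      ((m + 1 <= gamma <= 2 * m)%nat /\
         set_eq A (follower S nil) /\ set_eq B (follower S nil)))).
Proof.
  intros Hm Ha Ham. cbv zeta.
  apply (comb_main m ltac:(lia) (Sigma_HC m a)).
  intro w. apply Sigma_char; auto.
Qed.
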